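(* Let $X=PS$ where $P,S\in\mathrm{Sym}(n)$ and $P$ is positive definite. Let $\lambda_{\min},\lambda_{\max}$ be the smallest and largest eigenvalues of $P$, $\varrho=\lambda_{\min}/\lambda_{\max}\in(0,1]$ and $c=\frac{(1-\varrho)^2}{1+\varrho^2}\in[0,1)$. Then $$\operatorname{tr}(X^2)-|X|^2\ge -c\,|\mathring X|^2,$$ where $\mathring X=X-\frac{\operatorname{tr}X}{n}\mathrm{Id}$.
   Context: $\mathrm{Sym}(n)$ denotes real symmetric $n\times n$ matrices; $|X|^2=\operatorname{tr}(XX^{\mathsf T})$ is the squared Frobenius norm. *)

(* Defs.v *)
From mathcomp Require Import all_boot all_order all_algebra.
Set Implicit Arguments. Unset Strict Implicit. Unset Printing Implicit Defensive.
Import Order.TTheory GRing.Theory Num.Theory.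
Local Open Scope ring_scope.

Definition symmx (R : ringType) (n : nat) (A : 'M[R]_n) : Prop := A^T = A.

Definition posdefmx (R : numDomainType) (n : nat) (A : 'M[R]_n) : Prop :=
  symmx A /\ forall v : 'cV[R]_n, v != 0 -> 0 < (v^T *m A *m v) 0 0.

Definition frob2 (R : ringType) (n : nat) (X : 'M[R]_n) : R := \tr (X *m X^T).

Definition tracefree (R : fieldType) (n : nat) (X : 'M[R]_n) : 'M[R]_n :=
  X - (\tr X / n%:R)%:M.

(* Main.v *)
Require Import Defs.
From mathcomp Require Import all_boot all_order all_algebra.
From mathcomp Require Import sesquilinear spectral complex.
From mathcomp Require Import ring lra.
Import Order.TTheory GRing.Theory Num.Theory Num.Def.
Local Open Scope ring_scope.
Set Implicit Arguments. Unset Strict Implicit. Unset Printing Implicit Defensive.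

Lemma scal (R : rcfType) (l L a b : R) : 0 < l -> l <= a <= L -> l <= b <= L ->
  0 <= 2 * a * b - (1 - (1 - l / L) ^+ 2 / (1 + (l / L) ^+ 2)) * (a ^+ 2 + b ^+ 2).
Proof.
move=> l0 /andP[la aL] /andP[lb bL].
have L0 : 0 < L by lra.
set r := l / L.
have r0 : 0 < r by rewrite divr_gt0.
have rL : r * L = l by rewrite /r divfK // gt_eqF.
have d0 : 0 < 1 + r ^+ 2 by apply: ltr_wpDr; [exact: sqr_ge0 | exact: ltr01].
have -> : 2 * a * b - (1 - (1 - r) ^+ 2 / (1 + r ^+ 2)) * (a ^+ 2 + b ^+ 2)
   = 2 * ((a - r * b) * (b - r * a)) / (1 + r ^+ 2).
  by field; rewrite gt_eqF.
apply: divr_ge0; last exact: ltW.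
apply: mulr_ge0 => //; apply: mulr_ge0; rewrite subr_ge0.
  by apply: le_trans (la); rewrite -rL ler_wpM2l // ltW.
by apply: le_trans (lb); rewrite -rL ler_wpM2l // ltW.
Qed.

Section C.
Variable R : rcfType.
Local Notation C := (complex R).
Local Notation toC := (real_complex R).

Definition frobC n (M : 'M[C]_n) := \tr (M *m map_mx conjC M^T).

Lemma realC (x : R) : conjC (toC x) = toC x.
Proof. by apply: conj_Creal; apply/complex_realP; exists x. Qed.

Lemma frobCE n (M : 'M[C]_n) :
  frobC M = \sum_(i < n) \sum_(j < n) M i j * conjC (M i j).
Proof. by rewrite /frobC /mxtrace; apply: eq_bigr => i _; rewrite mxE; apply: eq_bigr => j _; rewrite !mxE. Qed.

Lemma Eq_le (x y : C) : x = y -> x <= y.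
Proof. by move->. Qed.

Lemma mainC n (l L c : R) (r : 'I_n -> R) (T Y : 'M[C]_n) (k : C) :
  0 < l -> (forall i, l <= r i <= L) -> c = (1 - l/L)^+2/(1+(l/L)^+2) ->
  map_mx conjC T^T = T ->
  Y = \matrix_(i,j) (toC (r i) * T i j) ->
  - toC c * frobC (Y - k%:M) <= \tr (Y *m Y) - frobC Y.
Proof.
move=> l0 rb ce hT hY.
have Yij i j : Y i j = toC (r i) * T i j by rewrite hY mxE.
have Tji i j : T j i = conjC (T i j).
  by have /matrixP /(_ j i) := hT; rewrite !mxE => <-.
set t := fun i j => T i j * conjC (T i j).
have tsym i j : t j i = t i j by rewrite /t Tji conjCK mulrC.
have t0 i j : 0 <= t i j by rewrite /t mul_conjC_ge0.
have c0 : 0 <= c.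
  rewrite ce; apply: divr_ge0; first exact: sqr_ge0.
  by apply: addr_ge0; [exact: ler01 | exact: sqr_ge0].
pose G := \sum_(i < n) \sum_(j < n) (if i == j then 0 else toC (r i) ^+ 2 * t i j).
have FG : G <= frobC (Y - k%:M).
  rewrite frobCE; apply: ler_sum => i _; apply: ler_sum => j _.
  rewrite !mxE; case: eqP => [_|/eqP ne]; first exact: mul_conjC_ge0.
  rewrite mulr0n subr0 Yij rmorphM /= realC; apply: Eq_le.
  by rewrite /t; ring.
apply: le_trans (_ : - toC c * G <= _).
  by rewrite !mulNr lerN2 ler_wpM2l // ler0c.
rewrite -subr_ge0.
pose h i j := t i j * (toC (r i) * toC (r j) - toC (r i) ^+ 2 +
   (if i == j then 0 else toC c * toC (r i) ^+ 2)).
have -> : \tr (Y *m Y) - frobC Y - - toC c * G = \sum_(i < n) \sum_(j < n) h i j.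
  rewrite mulNr opprK /G frobCE /mxtrace mulr_sumr -sumrB -big_split /=.
  apply: eq_bigr => i _; rewrite mulr_sumr mxE -sumrB -big_split /=.
  apply: eq_bigr => j _; rewrite !Yij (Tji i j) rmorphM /= realC /h /t.
  by case: eqP => _; ring.
have h2 : (\sum_(i < n) \sum_(j < n) h i j) *+ 2 = \sum_(i < n) \sum_(j < n) (h i j + h j i).
  rewrite mulr2n {2}exchange_big /= -big_split /=.
  by apply: eq_bigr => i _; rewrite -big_split.
rewrite -(pmulrn_lge0 _ (isT : (0 < 2)%N)) h2.
apply: sumr_ge0 => i _; apply: sumr_ge0 => j _.
case: (eqVneq i j) => [<-|ne].
  by rewrite /h eqxx addr0 subrr mulr0 addr0.
have -> : h i j + h j i = t i j *
   toC (2 * r i * r j - (1 - c) * (r i ^+ 2 + r j ^+ 2)).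
  rewrite /h tsym (negPf ne) eq_sym (negPf ne).
  rewrite !(rmorphB, rmorphM, rmorphD, rmorphXn, rmorph_nat, rmorph1) /=.
  by ring.
apply: mulr_ge0 => //; rewrite ler0c ce.
by have /andP[? ?] := rb i; have /andP[? ?] := rb j; apply: scal.
Qed.
End C.

Section Conj.
Variable R : rcfType.
Local Notation C := (complex R).
Local Notation toC := (real_complex R).
Local Notation adj M := (map_mx conjC (trmx M)).
Variable n : nat.
Variable U : 'M[C]_n.
Hypothesis UUt : U *m adj U = 1%:M.
Hypothesis UtU : adj U *m U = 1%:M.

Lemma adjM (M N : 'M[C]_n) : adj (M *m N) = adj N *m adj M.
Proof. by rewrite trmx_mul map_mxM. Qed.

Lemma adjK (M : 'M[C]_n) : adj (adj M) = M.
Proof. exact: trmxCK. Qed.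

Lemma adj_real (M : 'M[R]_n) : adj (map_mx toC M) = map_mx toC M^T.
Proof. by apply/matrixP => i j; rewrite !mxE realC. Qed.

Lemma adj_conj (M : 'M[C]_n) : adj (U *m M *m adj U) = U *m adj M *m adj U.
Proof. by rewrite !adjM adjK mulmxA. Qed.

Lemma tr_conj (M : 'M[C]_n) : \tr (U *m M *m adj U) = \tr M.
Proof. by rewrite mxtrace_mulC mulmxA UtU mul1mx. Qed.

Lemma conjM (M N : 'M[C]_n) :
  (U *m M *m adj U) *m (U *m N *m adj U) = U *m (M *m N) *m adj U.
Proof.
by rewrite !mulmxA -[U *m M *m adj U *m U]mulmxA UtU mulmx1.
Qed.

Lemma frob_conj (M : 'M[R]_n) :
  toC (frob2 M) = frobC (U *m map_mx toC M *m adj U).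
Proof.
rewrite /frobC adj_conj conjM tr_conj adj_real -map_mxM.
by rewrite trace_map_mx.
Qed.

Lemma trsq_conj (M : 'M[R]_n) :
  toC (\tr (M *m M)) = \tr ((U *m map_mx toC M *m adj U) *m (U *m map_mx toC M *m adj U)).
Proof. by rewrite conjM tr_conj -map_mxM trace_map_mx. Qed.

Lemma scal_conj (k : C) : U *m k%:M *m adj U = k%:M.
Proof. by rewrite mul_mx_scalar -scalemxAl UUt scalemx1. Qed.

End Conj.

Theorem lemma3p5 (R : rcfType) (n : nat) (P S : 'M[R]_n)
  (lmin lmax : R) :
  posdefmx P -> symmx S ->
  eigenvalue P lmin -> eigenvalue P lmax ->
  (forall a : R, eigenvalue P a -> lmin <= a <= lmax) ->
  let X := P *m S in
  let rho := lmin / lmax in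
  let c := (1 - rho) ^+ 2 / (1 + rho ^+ 2) in
  \tr (X *m X) - frob2 X >= - c * frob2 (tracefree X).
Proof.
move=> [HPs HPd] HS hmin hmax hb; cbv zeta.
set X := P *m S. set rho := lmin / lmax. set c := (1 - rho) ^+ 2 / _.
have l0 : 0 < lmin.
  move/eigenvalueP: hmin => [v hv vn0].
  have := HPd v^T; rewrite trmx_eq0 => /(_ vn0).
  rewrite trmxK hv -scalemxAl mxE.
  have s0 : 0 <= (v *m v^T) 0 0.
    by rewrite mxE; apply: sumr_ge0 => j _; rewrite mxE -expr2 sqr_ge0.
  by case: (ltP 0 lmin) => // hl; rewrite ltNge mulr_le0_ge0.
pose A := map_mx (real_complex R) P.
pose B := map_mx (real_complex R) S.
have herm (M : 'M[R]_n) : M^T = M -> map_mx conjC (map_mx (real_complex R) M)^T = map_mx (real_complex R) M.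
  by move=> hM; rewrite adj_real hM.
have hA := herm _ HPs.
have hB := herm _ HS.
have Anorm : A \is normalmx by apply/normalmxP; rewrite hA.
have hAU := orthomx_spectralP Anorm.
set U := spectralmx A in hAU.
set d := spectral_diag A in hAU.
have hU : U \is unitarymx by exact: spectral_unitarymx.
have Uunit : U \in unitmx by exact: spectral_unit.
have UUt : U *m map_mx conjC U^T = 1%:M by apply/unitarymxP.
have UtU : map_mx conjC U^T *m U = 1%:M.
  by rewrite -invmx_unitary // mulVmx.
have UA : U *m A = diag_mx d *m U.
  by rewrite [in LHS]hAU !mulmxA mulmxV // mul1mx.
have Aherm : A \is hermsymmx.
  apply: realsym_hermsym.
    by apply/is_hermitianmxP; rewrite expr0 scale1r; apply/matrixP => i j; rewrite /A !mxE -[P in LHS]HPs mxE.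
  by apply/mxOverP => i j; rewrite mxE; apply/complex_realP; exists (P i j).
have dreal := hermitian_spectral_diag_real Aherm.
pose r := fun i : 'I_n => complex.Re (d 0 i).
have dr i : d 0 i = (real_complex R) (r i).
  by rewrite /r RRe_real //; move/mxOverP: dreal; apply.
have rb i : lmin <= r i <= lmax.
  apply: hb; rewrite eigenvalue_root_char -(fmorph_root (real_complex R)) map_char_poly.
  rewrite -/A. have E := dr i. rewrite [X in root _ X](_ : _ = d 0 i); last by rewrite E. rewrite -eigenvalue_root_char; apply/eigenvalueP.
  exists (row i U).
    by rewrite -row_mul UA mul_diag_mx; apply/rowP => j; rewrite !mxE.
  apply/eqP => hrow.
  have := congr1 (fun M => (M *m map_mx conjC U^T) 0 i) hrow.
  by rewrite -row_mul UUt mul0mx !mxE eqxx /=; move/eqP; rewrite oner_eq0.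
pose T := U *m B *m map_mx conjC U^T.
pose Y := U *m map_mx (real_complex R) X *m map_mx conjC U^T.
have hT : map_mx conjC T^T = T by rewrite /T adj_conj hB.
have hY : Y = \matrix_(i,j) (real_complex R (r i) * T i j).
  have -> : Y = diag_mx d *m T.
    by rewrite /Y /T /X map_mxM -/A -/B !mulmxA UA.
  by rewrite mul_diag_mx; apply/matrixP => i j; rewrite !mxE dr.
pose k := real_complex R (\tr X / n%:R).
have key := @mainC R n lmin lmax c r T Y k l0 rb erefl hT hY.
rewrite -lecR rmorphB rmorphM rmorphN /=.
rewrite (frob_conj UtU) (trsq_conj UtU) (frob_conj UtU) -/Y.
rewrite /tracefree map_mxB map_scalar_mx mulmxBr mulmxBl (scal_conj UUt) -/Y.
exact: key.
Qed.
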